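(* Let $p:\tilde\Gamma\to\Gamma$ be a regular cover, let $\Lambda$ be a finite induced subgraph of $\tilde\Gamma$, and let $\phi=p|_\Lambda:\Lambda\to\Gamma$; suppose that $\phi$ is surjective on vertex sets. Let $F$ be a finite nonempty subset of $V(\tilde\Gamma)$, let $\Sigma$ be the set of all deck transformations $\sigma:\tilde\Gamma\to\tilde\Gamma$ with $\sigma(\Lambda)\cap F\ne\emptyset$, and let $\Lambda_1$ be the induced subgraph of $\tilde\Gamma$ on $\bigcup_{\sigma\in\Sigma}\sigma(V(\Lambda))$. If $\phi^*:G(\Gamma)\to G(\Lambda)$ is injective, then $\phi_1=p|_{\Lambda_1}:\Lambda_1\to\Gamma$ is $F$-surviving.
   Context: All graphs are undirected and simplicial; $\Gamma$ is finite, $\tilde\Gamma$ may be infinite. A map of graphs sends vertices to vertices and adjacent vertices to adjacent vertices. A covering $p:\tilde\Gamma\to\Gamma$ is a surjective map of graphs restricting to a bijection from the neighbours of each $v'$ to the neighbours of $p(v')$; a deck transformation is a graph automorphism $\sigma$ of $\tilde\Gamma$ with $p\circ\sigma=p$; the cover is regular if the deck group acts transitively on each fiber. ${\operatorname{Lk}}_\Gamma(v)$ is the set of neighbours of $v$. $G(\Gamma)$ is the group generated by $V(\Gamma)$ with relations $[u,v]=1$ whenever $\{u,v\}$ is NOT an edge. A map of graphs $\phi:\Lambda\to\Gamma$ induces $\phi^*:G(\Gamma)\to G(\Lambda)$, $\phi^*(v)=\prod_{v'\in\phi^{-1}(v)}v'$ (identity if empty); fixing a total order on $V(\Lambda)$,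 for a word $w$, $\phi^*(w)$ denotes the word obtained by substituting for each letter $v^{\pm1}$ the product over $\phi^{-1}(v)$ in increasing order, resp. its formal inverse. A word is reduced if of minimal length for the element it represents; ${\operatorname{supp}}(w)$ is the set of vertices occurring in $w$ (with either exponent). In a word $u$ in $G(\Lambda)$, a subword $x^{\pm1}u_1x^{\mp1}$ is an innermost cancellation of $x$ if ${\operatorname{supp}}(u_1)\cap{\operatorname{Lk}}_\Lambda(x)=\emptyset$ and $u_1$ contains no letter $x^{\pm1}$. $\phi$ is $F$-surviving if for every $v'\in F$ and every reduced word $w$ in $G(\Gamma)$, $\phi^*(w)$ has no innermost cancellation of $v'$. *)

(* Defs.v *)
From HB Require Import structures.
From mathcomp Require Import all_boot.
From Stdlib Require Relation_Operators.
Set Implicit Arguments. Unset Strict Implicit. Unset Printing Implicit Defensive.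

Definition simple_graph (T : Type) (e : rel T) := symmetric e /\ irreflexive e.

Definition graph_map (T V : Type) (eT : rel T) (eV : rel V) (f : T -> V) :=
  forall x y, eT x y -> eV (f x) (f y).

(* covering: surjective graph map, bijective from Lk(x) onto Lk(p x) *)
Definition covering (T V : Type) (e : rel T) (eG : rel V) (p : T -> V) :=
  [/\ (forall v, exists x, p x = v), graph_map e eG p,
      (forall x y z, e x y -> e x z -> p y = p z -> y = z) &
      (forall x u, eG (p x) u -> exists y, e x y /\ p y = u)].

Definition deck (T V : Type) (e : rel T) (p : T -> V) (s : T -> T) :=
  [/\ bijective s, (forall x y, e (s x) (s y) = e x y) & (forall x, p (s x) = p x)].

Definition regular_cover (T V : Type) (e : rel T) (eG : rel V) (p : T -> V) :=
  covering e eG p /\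
  (forall x y, p x = p y -> exists s, deck e p s /\ s x = y).

(* Words: a letter (x, true) is x, (x, false) is x^-1. *)
Definition word (T : Type) := seq (T * bool).

(* Elementary moves for G(Gamma) on vertex set inV with adjacency e:
   free cancellation, and commutation of NON-adjacent generators. *)
Inductive raag_step (T : eqType) (inV : pred T) (e : rel T) : word T -> word T -> Prop :=
| rs_cancel : forall (u w : word T) x b, inV x ->
    raag_step inV e (u ++ (x, b) :: (x, ~~ b) :: w) (u ++ w)
| rs_comm : forall (u w : word T) x y a b, inV x -> inV y -> ~~ e x y ->
    raag_step inV e (u ++ (x, a) :: (y, b) :: w) (u ++ (y, b) :: (x, a) :: w).

Definition raag_eq (T : eqType) (inV : pred T) (e : rel T) : word T -> word T -> Prop :=
  Relation_Operators.clos_refl_sym_trans _ (raag_step inV e).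

Definition word_on (T : Type) (inV : pred T) (w : word T) := all (fun l => inV l.1) w.

Definition reduced (T : eqType) (inV : pred T) (e : rel T) (w : word T) :=
  word_on inV w /\
  forall w', word_on inV w' -> raag_eq inV e w w' -> size w <= size w'.

(* phi^* on letters/words; the subgraph Lambda is given by the duplicate-free
   list ord of its vertices, whose order is the fixed total order *)
Definition pull_letter (T V : eqType) (p : T -> V) (ord : seq T) (l : V * bool) : word T :=
  let xs := [seq x <- ord | p x == l.1] in
  if l.2 then [seq (x, true) | x <- xs] else rev [seq (x, false) | x <- xs].

Definition pull (T V : eqType) (p : T -> V) (ord : seq T) (w : word V) : word T :=
  flatten (map (pull_letter p ord) w).

Definition pull_injective (T : eqType) (V : finType) (e : rel T) (eG : rel V)
    (p : T -> V) (ord : seq T) :=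
  forall w1 w2 : word V,
    raag_eq (mem ord) e (pull p ord w1) (pull p ord w2) -> raag_eq predT eG w1 w2.

(* innermost cancellation of x in u (Lk_Lambda(x) = neighbours of x; all letters
   of u are vertices of Lambda) *)
Definition innermost_cancel (T : eqType) (e : rel T) (x : T) (u : word T) :=
  exists (u0 u1 u2 : word T) (b : bool),
    u = u0 ++ (x, b) :: u1 ++ (x, ~~ b) :: u2 /\
    all (fun l => ~~ e x l.1) u1 /\ all (fun l => l.1 != x) u1.

Definition F_surviving (T : eqType) (V : finType) (e : rel T) (eG : rel V)
    (p : T -> V) (ord : seq T) (F : seq T) :=
  forall v', v' \in F -> forall w : word V, reduced predT eG w ->
    ~ innermost_cancel e v' (pull p ord w).

(* Main.v *)
Require Import Defs.
From HB Require Import structures.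
From mathcomp Require Import all_boot.
From Stdlib Require Import Relation_Operators.
From mathcomp Require Import zify.

Set Implicit Arguments. Unset Strict Implicit. Unset Printing Implicit Defensive.

Lemma cat_eq_split (B : Type) (s1 t u v : seq B) (d : B) :
  s1 ++ t = u ++ d :: v ->
  (exists v', s1 = u ++ d :: v' /\ v = v' ++ t) \/
  (exists u', u = s1 ++ u' /\ t = u' ++ d :: v).
Proof.
elim: s1 u => [|x s1 IH] u /=; first by move=> ->; right; exists u.
case: u => [|y u] /=.
  by case=> -> <-; left; exists s1.
case=> -> /IH [[v' [-> ->]]|[u' [-> ->]]].
  by left; exists v'.
by right; exists u'.
Qed.

Lemma split_flatten (A B : Type) (f : A -> seq B) w u0 c r :
  flatten (map f w) = u0 ++ c :: r ->
  exists w0 a w' s0 s1, [/\ w = w0 ++ a :: w', f a = s0 ++ c :: s1,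
     u0 = flatten (map f w0) ++ s0 & r = s1 ++ flatten (map f w')].
Proof.
elim: w u0 => [|a w IH] u0 /=; first by case: u0.
move=> /(@cat_eq_split B (f a)) [[v' [Ha Hr]]|[u' [Hu Ht]]].
  by exists [::], a, w, u0, v'.
have [w0 [a1 [w' [s0 [s1 [H1 H2 H3 H4]]]]]] := IH _ Ht.
exists (a :: w0), a1, w', s0, s1; split=> //; first by rewrite H1.
by rewrite Hu H3 /= catA.
Qed.

Section Raag.
Variables (T : eqType) (inV : pred T) (e : rel T).
Local Notation R := (raag_eq inV e).

Lemma step_cat a s t c : raag_step inV e s t -> raag_step inV e (a ++ s ++ c) (a ++ t ++ c).
Proof.
case=> [u w y b Hy | u w y z a' b Hy Hz Hyz].
  have -> : a ++ (u ++ (y,b)::(y,~~b)::w) ++ c = (a ++ u) ++ (y,b)::(y,~~b)::(w ++ c)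
    by rewrite -!catA.
  have -> : a ++ (u ++ w) ++ c = (a ++ u) ++ (w ++ c) by rewrite -!catA.
  exact: rs_cancel.
have -> : a ++ (u ++ (y,a')::(z,b)::w) ++ c = (a ++ u) ++ (y,a')::(z,b)::(w ++ c)
  by rewrite -!catA.
have -> : a ++ (u ++ (z,b)::(y,a')::w) ++ c = (a ++ u) ++ (z,b)::(y,a')::(w ++ c)
  by rewrite -!catA.
exact: rs_comm.
Qed.

Lemma R_ctx a s t c : R s t -> R (a ++ s ++ c) (a ++ t ++ c).
Proof.
elim=> [x y H|x|x y _ IH|x y z _ IH1 _ IH2].
- by apply: rst_step; apply: step_cat.
- exact: rst_refl.
- exact: rst_sym.
- exact: rst_trans IH2.
Qed.

Lemma R_cat s t s' t' : R s t -> R s' t' -> R (s ++ s') (t ++ t').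
Proof.
move=> H1 H2; apply: (@rst_trans _ _ _ (t ++ s')).
  by have := R_ctx [::] s' H1.
by have := R_ctx t [::] H2; rewrite !cats0.
Qed.

Lemma R_trans s t u : R s t -> R t u -> R s u.
Proof. exact: rst_trans. Qed.

Lemma R_refl s : R s s.
Proof. exact: rst_refl. Qed.

Lemma comm_letter l t :
  (forall l', l' \in t -> [/\ inV l.1, inV l'.1 & ~~ e l.1 l'.1]) ->
  R (l :: t) (t ++ [:: l]).
Proof.
case: l => z a /=; elim: t => [|[y b] t IH] H /=; first exact: R_refl.
apply: (@R_trans _ ((y, b) :: (z, a) :: t)).
  have [Hz Hy Hzy] := H (y, b) (mem_head _ _).
  apply: rst_step; exact: (@rs_comm _ _ _ [::] t z y a b).
apply: (@R_cat [:: (y, b)] [:: (y, b)] ((z, a) :: t) (t ++ [:: (z, a)])); first exact: R_refl.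
by apply: IH => l' Hl; apply: H; rewrite inE Hl orbT.
Qed.

Lemma comm_list s t :
  (forall l l', l \in s -> l' \in t -> [/\ inV l.1, inV l'.1 & ~~ e l.1 l'.1]) ->
  R (s ++ t) (t ++ s).
Proof.
elim: s => [|l s IH] H /=; first by rewrite cats0; exact: R_refl.
apply: (@R_trans _ ([:: l] ++ (t ++ s))).
  apply: (@R_cat [:: l] [:: l] (s ++ t) (t ++ s)); first exact: R_refl.
  apply: IH => l1 l' H1 H2; apply: H => //; by rewrite inE H1 orbT.
have -> : t ++ l :: s = (t ++ [:: l]) ++ s by rewrite -catA.
apply: (@R_cat ([:: l] ++ t) (t ++ [:: l]) s s); last exact: R_refl.
exact: comm_letter (fun l' H2 => H l l' (mem_head _ _) H2).
Qed.

Definition inv (s : word T) := rev (map (fun l => (l.1, ~~ l.2)) s).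

Lemma inv_cancel s : all (fun l => inV l.1) s -> R (s ++ inv s) [::].
Proof.
elim: s => [|[x b] s IH] /=; first by move=> _; exact: R_refl.
case/andP=> Hx Hs.
rewrite /inv /= rev_cons -cats1 -/(inv s).
have -> : (x, b) :: s ++ inv s ++ [:: (x, ~~ b)] =
   [:: (x, b)] ++ (s ++ inv s) ++ [:: (x, ~~ b)] by rewrite catA.
apply: (@R_trans _ ([:: (x, b)] ++ [::] ++ [:: (x, ~~ b)])).
  exact: R_ctx (IH Hs).
apply: rst_step; exact: (@rs_cancel _ _ _ [::] [::] x b Hx).
Qed.

End Raag.

Section Pull.
Variables (T V : eqType) (p : T -> V).

Lemma mem_pull_letter ord y s' l :
  ((y, s') \in pull_letter p ord l) = [&& s' == l.2, y \in ord & p y == l.1].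
Proof.
case: l => v [] /=; rewrite /pull_letter /= ?mem_rev;
  apply/mapP/and3P => [[z Hz [-> ->]]|[/eqP -> Hy Hp]];
  try (by move: Hz; rewrite mem_filter => /andP [-> ->]);
  by exists y => //; rewrite mem_filter Hp Hy.
Qed.

Lemma pull_cat ord s t : pull p ord (s ++ t) = pull p ord s ++ pull p ord t.
Proof. by rewrite /pull map_cat flatten_cat. Qed.

Lemma pull_cons ord a s : pull p ord (a :: s) = pull_letter p ord a ++ pull p ord s.
Proof. by []. Qed.

Lemma mem_pull ord l w : l \in pull p ord w -> exists2 a, a \in w & l \in pull_letter p ord a.
Proof. by case/flattenP=> s /mapP [a Ha ->] Hl; exists a. Qed.

Lemma pull_letter_inv ord v b :
  pull_letter p ord (v, ~~ b) = inv (pull_letter p ord (v, b)).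
Proof.
case: b; rewrite /pull_letter /inv /=.
  by rewrite -map_comp.
by rewrite map_rev revK -map_comp.
Qed.

End Pull.

Theorem lemma2p4 (T : eqType) (V : finType) (e : rel T) (eG : rel V) (p : T -> V)
    (L F L1 : seq T) :
  simple_graph e -> simple_graph eG -> regular_cover e eG p ->
  uniq L -> (forall v : V, exists2 x, x \in L & p x = v) ->
  F != [::] ->
  uniq L1 ->
  (forall y, y \in L1 <->
     exists s, [/\ deck e p s, (exists2 x, x \in L & s x \in F)
                 & (exists2 x, x \in L & y = s x)]) ->
  pull_injective e eG p L ->
  F_surviving e eG p L1 F.
Proof.
move=> _ _ [_ Hreg] _ _ _ _ HL1 Hinj x xF w [_ Hred] [u0 [u1 [u2 [b [Hu [He Hne]]]]]].
have [w0 [a [w' [s0 [s1 [Hw Ha _ Hr]]]]]] := split_flatten Hu.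
have : (x, b) \in pull_letter p L1 a by rewrite Ha mem_cat mem_head orbT.
rewrite mem_pull_letter => /and3P [/eqP Hb xL1 /eqP Hpa].
case: (cat_eq_split (esym Hr)) => [[v' [Hs1 _]] | [u1' [Hu1 Ht]]].
  have : (x, ~~ b) \in pull_letter p L1 a.
    by rewrite Ha Hs1 !(mem_cat, inE) eqxx !orbT.
  by rewrite mem_pull_letter -Hb; case: b {Hb Hu Hr Hs1 Ha}.
have [wm [a' [w2 [s0' [s1' [Hw' Ha' Hu1' _]]]]]] := split_flatten Ht.
have : (x, ~~ b) \in pull_letter p L1 a' by rewrite Ha' mem_cat mem_head orbT.
rewrite mem_pull_letter => /and3P [/eqP Hb' _ /eqP Hpa'].
have Ea : a = (p x, b) by case: a {Ha Hw} Hb Hpa => ? ? /= -> ->.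
have Ea' : a' = (p x, ~~ b) by case: a' {Ha' Hw'} Hb' Hpa' => ? ? /= -> ->.
have HwmL1 : forall l, l \in pull p L1 wm -> ~~ e x l.1.
  move=> l Hl; have : l \in u1 by rewrite Hu1 Hu1' !mem_cat -/(pull p L1 wm) Hl !orbT.
  by move/(allP He).
have H2 : forall a'' z y, a'' \in wm -> z \in L -> p z = p x -> y \in L -> p y = a''.1 ->
    ~~ e z y.
  move=> a'' z y Ha'' zL pz yL py.
  have [tau [Hdeck Htz]] := Hreg z x pz.
  have tyL1 : tau y \in L1.
    apply/HL1; exists tau; split=> //; first by exists z => //; rewrite Htz.
    by exists y.
  case: Hdeck => _ Hte Htp.
  have : (tau y, a''.2) \in pull p L1 wm.
    apply/flattenP; exists (pull_letter p L1 a''); first by apply/mapP; exists a''.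
    by rewrite mem_pull_letter eqxx tyL1 Htp py eqxx.
  by move/HwmL1 => /=; rewrite -Htz Hte.
have Hw'' : w = w0 ++ (p x, b) :: wm ++ (p x, ~~ b) :: w2 by rewrite Hw Hw' Ea Ea'.
pose w3 := w0 ++ wm ++ w2.
have Heq : raag_eq predT eG w w3.
  apply: Hinj; rewrite Hw'' /w3 !(pull_cat, pull_cons) pull_letter_inv.
  set A := pull_letter p L (p x, b).
  set M := pull p L wm.
  apply: R_cat; first exact: R_refl.
  apply: (@R_trans _ _ _ _ ((M ++ A) ++ inv A ++ pull p L w2)).
    rewrite catA; apply: R_cat; last exact: R_refl.
    apply: comm_list => l l' Hl Hl'.
    case: l Hl => z s; rewrite mem_pull_letter => /and3P [_ zL /eqP pz].
    case: l' Hl' => y s' /(@mem_pull _ _ _ _ _ _) [a'' Ha'' ].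
    rewrite mem_pull_letter => /and3P [_ yL /eqP py] /=.
    by split=> //; apply: (H2 a'').
  rewrite -catA; apply: R_cat; first exact: R_refl.
  rewrite catA -[pull p L w2]cat0s; apply: R_cat; last exact: R_refl.
  apply: inv_cancel; apply/allP => -[z s]; rewrite mem_pull_letter.
  by case/and3P.
have := Hred w3 (introT allP (fun _ _ => erefl)) Heq.
rewrite Hw'' /w3 !size_cat /=  size_cat /= => H; lia.
Qed.
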